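(* Let $(\mathcal{M},\phi,\xi,\eta,g)$ be a Riemannian $\Pi$-manifold of dimension $2n+1$. Then $\mathcal{M}$ belongs to the class $\mathcal{U}_1=\mathcal{F}_1\oplus\mathcal{F}_2\oplus\mathcal{F}_4\oplus\mathcal{F}_5\oplus\mathcal{F}_6\oplus\mathcal{F}_8\oplus\mathcal{F}_9\oplus\mathcal{F}_{10}\oplus\mathcal{F}_{11}$ if and only if $N(\phi x,\phi y)=0$ for all vector fields $x,y$ on $\mathcal{M}$.
   Context: A Riemannian $\Pi$-manifold $(\mathcal{M},\phi,\xi,\eta,g)$ is a $(2n+1)$-dimensional smooth manifold with a $(1,1)$-tensor field $\phi$, a vector field $\xi$, a 1-form $\eta$ and a Riemannian metric $g$ such that $\phi\xi=0$, $\phi^2=I-\eta\otimes\xi$, $\eta\circ\phi=0$, $\eta(\xi)=1$, $\operatorname{tr}\phi=0$, $g(\phi x,\phi y)=g(x,y)-\eta(x)\eta(y)$ (hence $g(\phi x,y)=g(x,\phi y)$, $g(x,\xi)=\eta(x)$). Let $\nabla$ be the Levi-Civita connection of $g$ and $F(x,y,z)=g((\nabla_x\phi)y,z)$. With respect to a basis $\{\xi,e_1,\dots,e_{2n}\}$ of $T_p\mathcal{M}$ and $(g^{ij})$ the inverse matrix of $(g_{ij})$, the Lee forms are $\theta=g^{ij}F(e_i,e_j,\cdot)$, $\theta^*=g^{ij}F(e_i,\phi e_j,\cdot)$, $\omega=F(\xi,\xi,\cdot)$. The basic classes $\mathcal{F}_1,\dots,\mathcal{F}_{11}$ are defined by the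 following conditions on $F$ (for all $x,y,z$): $\mathcal{F}_1$: $F(x,y,z)=\frac{1}{2n}\{g(\phi x,\phi y)\theta(\phi^2z)+g(\phi x,\phi z)\theta(\phi^2y)-g(x,\phi y)\theta(\phi z)-g(x,\phi z)\theta(\phi y)\}$; $\mathcal{F}_2$: $F(\xi,y,z)=0$, $F(x,\xi,z)=0$, $\theta=0$, $F(x,y,\phi z)+F(y,z,\phi x)+F(z,x,\phi y)=0$; $\mathcal{F}_3$: $F(\xi,y,z)=0$, $F(x,\xi,z)=0$, $F(x,y,z)+F(y,z,x)+F(z,x,y)=0$; $\mathcal{F}_4$: $F(x,y,z)=\frac{\theta(\xi)}{2n}\{g(\phi x,\phi y)\eta(z)+g(\phi x,\phi z)\eta(y)\}$; $\mathcal{F}_5$: $F(x,y,z)=\frac{\theta^*(\xi)}{2n}\{g(x,\phi y)\eta(z)+g(x,\phi z)\eta(y)\}$; $\mathcal{F}_6$: $F(x,y,z)=F(x,y,\xi)\eta(z)+F(x,z,\xi)\eta(y)$, $F(x,y,\xi)=F(y,x,\xi)=F(\phi x,\phi y,\xi)$; $\mathcal{F}_7$: same first condition, $F(x,y,\xi)=-F(y,x,\xi)=F(\phi x,\phi y,\xi)$; $\mathcal{F}_8$: same first condition, $F(x,y,\xi)=F(y,x,\xi)=-F(\phi x,\phi y,\xi)$; $\mathcal{F}_9$: same first condition, $F(x,y,\xi)=-F(y,x,\xi)=-F(\phi x,\phi y,\xi)$; $\mathcal{F}_{10}$: $F(x,y,z)=-\eta(x)F(\xi,\phi y,\phi z)$;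 $\mathcal{F}_{11}$: $F(x,y,z)=\eta(x)\{\eta(y)\omega(z)+\eta(z)\omega(y)\}$. At each point, the space of $(0,3)$-tensors with the symmetries of $F$ (namely $F(x,y,z)=F(x,z,y)=-F(x,\phi y,\phi z)+\eta(y)F(x,\xi,z)+\eta(z)F(x,y,\xi)$) is the orthogonal direct sum of the eleven subspaces given by these conditions; $\mathcal{M}$ belongs to a direct sum $\mathcal{F}_{i_1}\oplus\cdots\oplus\mathcal{F}_{i_k}$ if at every point $F$ lies in the sum of the corresponding subspaces. The Nijenhuis tensor is $N(x,y)=(\nabla_{\phi x}\phi)y-\phi(\nabla_x\phi)y-(\nabla_x\eta)(y)\xi-(\nabla_{\phi y}\phi)x+\phi(\nabla_y\phi)x+(\nabla_y\eta)(x)\xi$. *)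

(* Defs.v *)
From HB Require Import structures.
From mathcomp Require Import all_boot all_order all_algebra.
Set Implicit Arguments. Unset Strict Implicit. Unset Printing Implicit Defensive.
Import Order.TTheory GRing.Theory Num.Theory.
Local Open Scope ring_scope.

Section PiDefs.
Variable R : realFieldType.
Variable n : nat.

Definition pdim := n.*2.+1.
Notation V := 'cV[R]_pdim.

Definition ip (G : 'M[R]_pdim) (x y : V) : R := (x^T *m G *m y) 0 0.
Definition ev (eta : 'rV[R]_pdim) (x : V) : R := (eta *m x) 0 0.

Definition Pi_structure (G P : 'M[R]_pdim) (xi : V) (eta : 'rV[R]_pdim) : Prop :=
  G^T = G /\
  (forall v : V, v != 0 -> 0 < ip G v v) /\
  P *m xi = 0 /\
  P *m P = 1%:M - xi *m eta /\
  eta *m P = 0 /\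
  ev eta xi = 1 /\
  \tr P = 0 /\
  (forall x y : V, ip G (P *m x) (P *m y) = ip G x y - ev eta x * ev eta y).

(* First-order data of the Levi-Civita connection at p:
   nabla_x phi = \sum_i x_i Dphi i, nabla_x xi = Dxi x,
   (nabla_x eta)(y) = g(nabla_x xi, y)  (since eta = g(xi,.) and nabla g = 0). *)
Definition nphi (Dphi : 'I_pdim -> 'M[R]_pdim) (x : V) : 'M[R]_pdim :=
  \sum_i x i 0 *: Dphi i.
Definition nxi (Dxi : 'M[R]_pdim) (x : V) : V := Dxi *m x.
Definition neta (G Dxi : 'M[R]_pdim) (x y : V) : R := ip G (nxi Dxi x) y.

(* The identities obtained by covariantly differentiating the structure
   equations with a metric connection (nabla g = 0). *)
Definition LC_jet (G P : 'M[R]_pdim) (xi : V) (eta : 'rV[R]_pdim)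
    (Dphi : 'I_pdim -> 'M[R]_pdim) (Dxi : 'M[R]_pdim) : Prop :=
  forall x y z : V,
  nphi Dphi x *m xi + P *m nxi Dxi x = 0 /\
      nphi Dphi x *m (P *m y) + P *m (nphi Dphi x *m y)
        = - (neta G Dxi x y *: xi) - ev eta y *: nxi Dxi x /\
      ip G (nphi Dphi x *m y) (P *m z) + ip G (P *m y) (nphi Dphi x *m z)
        = - (neta G Dxi x y * ev eta z) - ev eta y * neta G Dxi x z /\
      ip G (nphi Dphi x *m y) z = ip G y (nphi Dphi x *m z) /\
      neta G Dxi x (P *m y) + ev eta (nphi Dphi x *m y) = 0 /\
      ip G (nxi Dxi x) xi = 0 /\
      \tr (nphi Dphi x) = 0.

Definition Ften G Dphi (x y z : V) : R := ip G (nphi Dphi x *m y) z.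

Definition Nij G P xi Dphi Dxi (x y : V) : V :=
  nphi Dphi (P *m x) *m y - P *m (nphi Dphi x *m y) - neta G Dxi x y *: xi
  - nphi Dphi (P *m y) *m x + P *m (nphi Dphi y *m x) + neta G Dxi y x *: xi.

Definition tensor3 := 'I_pdim -> 'I_pdim -> 'I_pdim -> R.
Definition ev3 (T : tensor3) (x y z : V) : R :=
  \sum_i \sum_j \sum_k T i j k * x i 0 * y j 0 * z k 0.

Definition e (i : 'I_pdim) : V := delta_mx i 0.

Section Classes.
Variables (G P : 'M[R]_pdim) (xi : V) (eta : 'rV[R]_pdim).
Let g := ip G.
Let ph (x : V) : V := P *m x.
Let et := ev eta.
Let inv2n : R := (n.*2)%:R^-1.

Definition theta (T : tensor3) (z : V) : R :=
  \sum_i \sum_j (invmx G) i j * ev3 T (e i) (e j) z.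
Definition theta_s (T : tensor3) (z : V) : R :=
  \sum_i \sum_j (invmx G) i j * ev3 T (e i) (ph (e j)) z.
Definition omega (T : tensor3) (z : V) : R := ev3 T xi xi z.

Definition Fsym (T : tensor3) : Prop := forall x y z : V,
  ev3 T x y z = ev3 T x z y /\
  ev3 T x y z = - ev3 T x (ph y) (ph z) + et y * ev3 T x xi z
                 + et z * ev3 T x y xi.

Definition cls1 T := Fsym T /\ forall x y z, ev3 T x y z = inv2n *
  (g (ph x) (ph y) * theta T (ph (ph z)) + g (ph x) (ph z) * theta T (ph (ph y))
   - g x (ph y) * theta T (ph z) - g x (ph z) * theta T (ph y)).
Definition cls2 T := Fsym T /\ forall x y z,
  [/\ ev3 T xi y z = 0, ev3 T x xi z = 0, theta T z = 0 &
      ev3 T x y (ph z) + ev3 T y z (ph x) + ev3 T z x (ph y) = 0].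
Definition cls3 T := Fsym T /\ forall x y z,
  [/\ ev3 T xi y z = 0, ev3 T x xi z = 0 &
      ev3 T x y z + ev3 T y z x + ev3 T z x y = 0].
Definition cls4 T := Fsym T /\ forall x y z, ev3 T x y z =
  theta T xi * inv2n * (g (ph x) (ph y) * et z + g (ph x) (ph z) * et y).
Definition cls5 T := Fsym T /\ forall x y z, ev3 T x y z =
  theta_s T xi * inv2n * (g x (ph y) * et z + g x (ph z) * et y).
Definition cls_vert T := forall x y z,
  ev3 T x y z = ev3 T x y xi * et z + ev3 T x z xi * et y.
Definition cls6 T := Fsym T /\ cls_vert T /\ forall x y,
  ev3 T x y xi = ev3 T y x xi /\ ev3 T x y xi = ev3 T (ph x) (ph y) xi.
Definition cls7 T := Fsym T /\ cls_vert T /\ forall x y,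
  ev3 T x y xi = - ev3 T y x xi /\ ev3 T x y xi = ev3 T (ph x) (ph y) xi.
Definition cls8 T := Fsym T /\ cls_vert T /\ forall x y,
  ev3 T x y xi = ev3 T y x xi /\ ev3 T x y xi = - ev3 T (ph x) (ph y) xi.
Definition cls9 T := Fsym T /\ cls_vert T /\ forall x y,
  ev3 T x y xi = - ev3 T y x xi /\ ev3 T x y xi = - ev3 T (ph x) (ph y) xi.
Definition cls10 T := Fsym T /\ forall x y z,
  ev3 T x y z = - (et x * ev3 T xi (ph y) (ph z)).
Definition cls11 T := Fsym T /\ forall x y z,
  ev3 T x y z = et x * (et y * omega T z + et z * omega T y).

Definition in_U1 (F : V -> V -> V -> R) : Prop :=
  exists T1 T2 T4 T5 T6 T8 T9 T10 T11 : tensor3,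
    cls1 T1 /\ cls2 T2 /\ cls4 T4 /\ cls5 T5 /\ cls6 T6 /\ cls8 T8 /\
    cls9 T9 /\ cls10 T10 /\ cls11 T11 /\
        (forall x y z, F x y z =
          ev3 T1 x y z + ev3 T2 x y z + ev3 T4 x y z + ev3 T5 x y z
          + ev3 T6 x y z + ev3 T8 x y z + ev3 T9 x y z + ev3 T10 x y z
          + ev3 T11 x y z).
End Classes.
End PiDefs.

(* Main.v *)
Require Import Defs.
From HB Require Import structures.
From mathcomp Require Import all_boot all_order all_algebra.
From mathcomp Require Import ring lra.
Set Implicit Arguments. Unset Strict Implicit. Unset Printing Implicit Defensive.
Import Order.TTheory GRing.Theory Num.Theory.
Local Open Scope ring_scope.


Section Base.
Variable R : realFieldType.
Variable n : nat.
Local Notation V := 'cV[R]_(pdim n).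
Variables (G P : 'M[R]_(pdim n)) (xi : V) (eta : 'rV[R]_(pdim n)).
Hypothesis hPi : Pi_structure G P xi eta.
Implicit Types (x y z v w : V) (a : R).

Lemma Gsym : G^T = G. Proof. by case: hPi. Qed.

Lemma ipC x y : ip G x y = ip G y x.
Proof.
have tr11 (A : 'M[R]_1) : A 0 0 = A^T 0 0 by rewrite mxE.
by rewrite /ip tr11 !trmx_mul trmxK Gsym mulmxA.
Qed.

Lemma ipLl a x y z : ip G (a *: x + y) z = a * ip G x z + ip G y z.
Proof. by rewrite /ip linearD linearZ /= !mulmxDl -!scalemxAl !mxE. Qed.
Lemma ipLr a x y z : ip G z (a *: x + y) = a * ip G z x + ip G z y.
Proof. by rewrite /ip mulmxDr -scalemxAr !mxE. Qed.
Lemma ipDl x y z : ip G (x + y) z = ip G x z + ip G y z.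
Proof. by have := ipLl 1 x y z; rewrite scale1r mul1r. Qed.
Lemma ipDr x y z : ip G z (x + y) = ip G z x + ip G z y.
Proof. by have := ipLr 1 x y z; rewrite scale1r mul1r. Qed.
Lemma ipZl a x z : ip G (a *: x) z = a * ip G x z.
Proof. by rewrite /ip linearZ /= -!scalemxAl !mxE. Qed.
Lemma ipZr a x z : ip G z (a *: x) = a * ip G z x.
Proof. by rewrite /ip -scalemxAr mxE. Qed.
Lemma ipNl x z : ip G (- x) z = - ip G x z.
Proof. by rewrite -scaleN1r ipZl mulN1r. Qed.
Lemma ipNr x z : ip G z (- x) = - ip G z x.
Proof. by rewrite -scaleN1r ipZr mulN1r. Qed.
Lemma ip0l z : ip G 0 z = 0.
Proof. by rewrite -(scale0r (0:V)) ipZl mul0r. Qed.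
Lemma ip0r z : ip G z 0 = 0.
Proof. by rewrite /ip mulmx0 mxE. Qed.

Lemma evL a x y : ev eta (a *: x + y) = a * ev eta x + ev eta y.
Proof. by rewrite /ev mulmxDr -scalemxAr !mxE. Qed.
Lemma evD x y : ev eta (x + y) = ev eta x + ev eta y.
Proof. by have := evL 1 x y; rewrite scale1r mul1r. Qed.
Lemma evZ a x : ev eta (a *: x) = a * ev eta x.
Proof. by rewrite /ev -scalemxAr !mxE. Qed.
Lemma evN x : ev eta (- x) = - ev eta x.
Proof. by rewrite -scaleN1r evZ mulN1r. Qed.
Lemma ev0 : ev eta 0 = 0.
Proof. by rewrite /ev mulmx0 mxE. Qed.

Lemma Pxi : P *m xi = 0. Proof. by case: hPi => _ [_ []]. Qed.
Lemma evP x : ev eta (P *m x) = 0.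
Proof. by case: hPi => _ [_ [_ [_ [h _]]]]; rewrite /ev mulmxA h mul0mx mxE. Qed.
Lemma evxi : ev eta xi = 1.
Proof. by case: hPi => _ [_ [_ [_ [_ [h _]]]]]. Qed.
Lemma PPe x : P *m (P *m x) = x - ev eta x *: xi.
Proof.
case: hPi => _ [_ [_ [h _]]].
rewrite mulmxA h mulmxBl mul1mx -mulmxA.
by rewrite [eta *m x]mx11_scalar mul_mx_scalar.
Qed.
Lemma PPP x : P *m (P *m (P *m x)) = P *m x.
Proof. by rewrite PPe evP scale0r subr0. Qed.
Lemma PPPP x : P *m (P *m (P *m (P *m x))) = P *m (P *m x).
Proof. by rewrite PPP. Qed.
Lemma decomp x : x = P *m (P *m x) + ev eta x *: xi.
Proof. by rewrite PPe subrK. Qed.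
Lemma PL a x y : P *m (a *: x + y) = a *: (P *m x) + P *m y.
Proof. by rewrite mulmxDr scalemxAr. Qed.
Lemma P0 : P *m (0 : V) = 0. Proof. by rewrite mulmx0. Qed.
Lemma PPxi : P *m (P *m xi) = 0. Proof. by rewrite Pxi mulmx0. Qed.

Lemma ipPP x y : ip G (P *m x) (P *m y) = ip G x y - ev eta x * ev eta y.
Proof. by case: hPi => _ [_ [_ [_ [_ [_ [_ h]]]]]]. Qed.
Lemma ipxi x : ip G x xi = ev eta x.
Proof. by have := ipPP x xi; rewrite Pxi ip0r evxi mulr1 => /eqP; rewrite eq_sym subr_eq0 => /eqP. Qed.
Lemma ipxil x : ip G xi x = ev eta x.
Proof. by rewrite ipC ipxi. Qed.
Lemma ipP x y : ip G (P *m x) y = ip G x (P *m y).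
Proof.
have := ipPP x (P *m y); rewrite evP mulr0 subr0 => <-.
by rewrite PPe ipDr ipNr ipZr ipxi evP mulr0 subr0.
Qed.

Lemma ip_pos v : v != 0 -> 0 < ip G v v.
Proof. by case: hPi => _ [h _]; apply: h. Qed.
Lemma ip_nondeg v : (forall z, ip G v z = 0) -> v = 0.
Proof.
move=> h; apply/eqP; apply/negPn/negP => /ip_pos; by rewrite h ltxx.
Qed.
End Base.


Section FBase.
Variable R : realFieldType.
Variable n : nat.
Local Notation V := 'cV[R]_(pdim n).
Variables (G P : 'M[R]_(pdim n)) (xi : V) (eta : 'rV[R]_(pdim n)).
Variables (Dphi : 'I_(pdim n) -> 'M[R]_(pdim n)) (Dxi : 'M[R]_(pdim n)).
Hypothesis hPi : Pi_structure G P xi eta.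
Hypothesis hLC : LC_jet G P xi eta Dphi Dxi.
Implicit Types (x y z v w : V) (a : R).
Local Notation F := (Ften G Dphi).

Lemma nphiL a x y : nphi Dphi (a *: x + y) = a *: nphi Dphi x + nphi Dphi y.
Proof.
rewrite /nphi scaler_sumr -big_split /=; apply: eq_bigr => i _.
by rewrite !mxE scalerDl scalerA.
Qed.
Lemma FL1 a x y u v : F (a *: x + y) u v = a * F x u v + F y u v.
Proof. by rewrite /Ften nphiL mulmxDl -scalemxAl ipLl. Qed.
Lemma FL2 a x y u v : F u (a *: x + y) v = a * F u x v + F u y v.
Proof. by rewrite /Ften mulmxDr -scalemxAr ipLl. Qed.
Lemma FL3 a x y u v : F u v (a *: x + y) = a * F u v x + F u v y.
Proof. by rewrite /Ften ipLr. Qed.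

Lemma Fsym23 x y z : F x y z = F x z y.
Proof. by have [_ [_ [_ [h _]]]] := hLC x y z; rewrite /Ften h (ipC hPi). Qed.

Lemma evF x y : ev eta (nphi Dphi x *m y) = F x y xi.
Proof. by rewrite /Ften (ipxi hPi). Qed.

Lemma netaP x z : neta G Dxi x (P *m z) = - F x z xi.
Proof.
have [_ [_ [_ [_ [h _]]]]] := hLC x z z.
by rewrite -evF; apply/eqP; rewrite -addr_eq0 h.
Qed.

Lemma neta_F (u b : V) : neta G Dxi u b = - F u (P *m b) xi.
Proof.
have [_ [_ [_ [_ [_ [h _]]]]]] := hLC u b b.
rewrite {1}(decomp hPi b) /neta ipDr ipZr h mulr0 addr0.
by have := netaP u (P *m b); rewrite /neta.
Qed.

Lemma FS2 x y z :
  F x y z = - F x (P *m y) (P *m z) + ev eta y * F x xi z + ev eta z * F x y xi.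
Proof.
have [_ [h _]] := hLC x y z.
have := congr1 (fun w => ip G w (P *m z)) h => /=.
rewrite ipDl (ipPP hPi) evF ipDl !ipNl !ipZl (ipxil hPi) (evP hPi) mulr0 oppr0 add0r.
rewrite -[ip G (nxi Dxi x) (P *m z)]/(neta G Dxi x (P *m z)) netaP.
rewrite -/(Ften G Dphi x (P *m y) (P *m z)) -/(Ften G Dphi x y z) (Fsym23 x z xi).
move=> h'. lra.
Qed.

Lemma F0_2 x z : F x 0 z = 0.
Proof. by have := FL2 1 0 0 x z; rewrite scale1r addr0 mul1r => h; lra. Qed.
Lemma Fxixi x : F x xi xi = 0.
Proof. by have := FS2 x xi xi; rewrite (Pxi hPi) F0_2 (evxi hPi) !mul1r => h; lra. Qed.
End FBase.


Section Tens.
Variable R : realFieldType.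
Variable n : nat.
Local Notation V := 'cV[R]_(pdim n).
Implicit Types (x y z u v w : V) (a : R).

Definition lin (h : V -> R) := forall a x y, h (a *: x + y) = a * h x + h y.
Definition trilin (f : V -> V -> V -> R) :=
  [/\ (forall y z, lin (fun x => f x y z)), (forall x z, lin (fun y => f x y z))
    & (forall x y, lin (fun z => f x y z))].
Definition tens (f : V -> V -> V -> R) : tensor3 R n :=
  fun i j k => f (e R i) (e R j) (e R k).

Lemma lin0 h : lin h -> h 0 = 0.
Proof. by move=> hl; have := hl 1 0 0; rewrite scale1r addr0 mul1r => H; lra. Qed.
Lemma linD h : lin h -> forall x y, h (x + y) = h x + h y.
Proof. by move=> hl x y; have := hl 1 x y; rewrite scale1r mul1r. Qed.
Lemma linZ h : lin h -> forall a x, h (a *: x) = a * h x.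
Proof. by move=> hl a x; have := hl a x 0; rewrite addr0 (lin0 hl) addr0. Qed.

Lemma vec_sum (x : V) : x = \sum_i x i 0 *: e R i.
Proof.
rewrite {1}(matrix_sum_delta x); apply: eq_bigr => i _.
by rewrite big_ord1.
Qed.

Lemma lin_sum h : lin h -> forall x, h x = \sum_i x i 0 * h (e R i).
Proof.
move=> hl x; rewrite {1}(vec_sum x).
rewrite (big_morph h (linD hl) (lin0 hl)).
by apply: eq_bigr => i _; rewrite (linZ hl).
Qed.

Lemma ev3_tens f : trilin f -> forall x y z, ev3 (tens f) x y z = f x y z.
Proof.
case=> h1 h2 h3 x y z.
rewrite (lin_sum (h1 y z) x) /ev3; apply: eq_bigr => i _.
rewrite (lin_sum (h2 (e R i) z) y) mulr_sumr; apply: eq_bigr => j _.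
rewrite (lin_sum (h3 (e R i) (e R j)) z) !mulr_sumr; apply: eq_bigr => k _.
rewrite /tens; ring.
Qed.

Lemma ev3_trilin (T : tensor3 R n) : trilin (ev3 T).
Proof.
split=> [y z a u v|x z a u v|x y a u v]; rewrite /ev3 mulr_sumr -big_split;
  apply: eq_bigr => i _; rewrite mulr_sumr -big_split;
  apply: eq_bigr => j _; rewrite mulr_sumr -big_split;
  apply: eq_bigr => k _; rewrite /= !mxE; ring.
Qed.

Lemma theta_tens G f : trilin f -> forall z,
  theta G (tens f) z = \sum_i \sum_j invmx G i j * f (e R i) (e R j) z.
Proof.
move=> hf z; apply: eq_bigr => i _; apply: eq_bigr => j _.
by rewrite ev3_tens.
Qed.

Lemma omega_tens xi f : trilin f -> forall z, omega xi (tens f) z = f xi xi z.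
Proof. by move=> hf z; rewrite /omega ev3_tens. Qed.
End Tens.


Section LClasses.
Variable R : realFieldType.
Variable n : nat.
Local Notation V := 'cV[R]_(pdim n).
Variables (G P : 'M[R]_(pdim n)) (xi : V) (eta : 'rV[R]_(pdim n)).
Hypothesis hPi : Pi_structure G P xi eta.
Implicit Types (x y z u v w : V) (a : R).

Definition Lf (f : V -> V -> V -> R) x y z :=
  f (P *m (P *m x)) (P *m y) z - f (P *m x) (P *m y) (P *m z)
  + f (P *m x) (P *m (P *m y)) xi * ev eta z
  - f (P *m (P *m y)) (P *m x) z + f (P *m y) (P *m x) (P *m z)
  - f (P *m y) (P *m (P *m x)) xi * ev eta z.

Lemma ipsym1 x y : ip G y (P *m x) = ip G x (P *m y).
Proof. by rewrite (ipC hPi) (ipP hPi). Qed.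
Lemma ipsym2 x y : ip G y (P *m (P *m x)) = ip G x (P *m (P *m y)).
Proof. by rewrite (ipC hPi) !(ipP hPi). Qed.

Lemma LF1 f (th : V -> R) c : th 0 = 0 ->
  (forall x y z, f x y z = c * (ip G (P *m x) (P *m y) * th (P *m (P *m z))
     + ip G (P *m x) (P *m z) * th (P *m (P *m y))
     - ip G x (P *m y) * th (P *m z) - ip G x (P *m z) * th (P *m y))) ->
  forall x y z, Lf f x y z = 0.
Proof.
move=> th0 hf x y z; rewrite /Lf !hf.
rewrite !(ipP hPi) !(PPP hPi) ?(Pxi hPi) ?P0 ?th0 ?ip0r ?mulr0 ?mul0r.
rewrite (ipsym1 x y) (ipsym2 x y).
ring.
Qed.
End LClasses.

Section Trilin.
Variable R : realFieldType.
Variable n : nat.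
Local Notation V := 'cV[R]_(pdim n).
Variables (G P : 'M[R]_(pdim n)) (xi : V) (eta : 'rV[R]_(pdim n)).
Hypothesis hPi : Pi_structure G P xi eta.
Implicit Types (x y z u v w : V) (a : R).
Variable f : V -> V -> V -> R.
Hypothesis hf : trilin f.

Lemma fL1 a x y u v : f (a *: x + y) u v = a * f x u v + f y u v.
Proof. by case: hf => h _ _; apply: h. Qed.
Lemma fL2 a x y u v : f u (a *: x + y) v = a * f u x v + f u y v.
Proof. by case: hf => _ h _; apply: (h u v). Qed.
Lemma fL3 a x y u v : f u v (a *: x + y) = a * f u v x + f u v y.
Proof. by case: hf => _ _ h; apply: (h u v). Qed.
Lemma f01 u v : f 0 u v = 0.
Proof. by case: hf => h _ _; apply: (lin0 (h u v)). Qed.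
Lemma f02 u v : f u 0 v = 0.
Proof. by case: hf => _ h _; apply: (lin0 (h u v)). Qed.
Lemma f03 u v : f u v 0 = 0.
Proof. by case: hf => _ _ h; apply: (lin0 (h u v)). Qed.

Lemma fPP1 : (forall u v, f xi u v = 0) -> forall x u v, f (P *m (P *m x)) u v = f x u v.
Proof. by move=> h x u v; rewrite {2}(decomp hPi x) addrC fL1 h mulr0 add0r. Qed.
Lemma fPP2 : (forall u v, f u xi v = 0) -> forall x u v, f u (P *m (P *m x)) v = f u x v.
Proof. by move=> h x u v; rewrite {2}(decomp hPi x) addrC fL2 h mulr0 add0r. Qed.
Lemma fPP3 : (forall u v, f u v xi = 0) -> forall x u v, f u v (P *m (P *m x)) = f u v x.
Proof. by move=> h x u v; rewrite {2}(decomp hPi x) addrC fL3 h mulr0 add0r. Qed.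

Definition Cyc x y z := f x y (P *m z) + f y z (P *m x) + f z x (P *m y).

Hypothesis hsym : forall x y z, f x y z = f x z y.
Hypothesis hS2 : forall x y z,
  f x y z = - f x (P *m y) (P *m z) + ev eta y * f x xi z + ev eta z * f x y xi.
Hypothesis h1 : forall y z, f xi y z = 0.
Hypothesis h2 : forall x z, f x xi z = 0.

Lemma h3 x y : f x y xi = 0. Proof. by rewrite hsym h2. Qed.
Lemma hR2 x y z : f x (P *m y) (P *m z) = - f x y z.
Proof. by rewrite [in RHS]hS2 h2 h3 !mulr0 !addr0 opprK. Qed.

Lemma L_horiz x y z : Lf P xi eta f x y z = - Cyc x y z - Cyc (P *m x) (P *m y) z.
Proof.
rewrite /Lf /Cyc !h3 !mul0r !subr0 !addr0.
rewrite ?(fPP1 h1) ?(fPP2 h2) ?(fPP3 h3).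
have e1 := hR2 (P *m x) y z.
have e2 := hR2 (P *m y) x z.
have e3 := hR2 x (P *m y) z. rewrite (fPP2 h2) in e3.
have e4 := hsym y z (P *m x).
have e5 := hsym (P *m y) z x.
have e6 := hR2 z (P *m x) y. rewrite (fPP2 h2) in e6.
lra.
Qed.

Lemma cyc_L x y z : Lf P xi eta f x y z + Lf P xi eta f y z x + Lf P xi eta f z x y
  = -2 * Cyc x y z.
Proof.
rewrite /Lf /Cyc !h3 !mul0r !subr0 !addr0.
rewrite ?(fPP1 h1) ?(fPP2 h2) ?(fPP3 h3).
have e1 := hR2 (P *m x) y z.
have e2 := hR2 (P *m y) x z.
have e3 := hR2 (P *m y) z x.
have e4 := hR2 (P *m z) y x.
have e5 := hR2 (P *m z) x y.
have e6 := hR2 (P *m x) z y.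
have s1 := hsym (P *m x) y z.
have s2 := hsym (P *m y) x z.
have s3 := hsym (P *m z) x y.
have e7 := hR2 x (P *m y) z. rewrite (fPP2 h2) in e7.
have e8 := hR2 y (P *m z) x. rewrite (fPP2 h2) in e8.
have e9 := hR2 z (P *m x) y. rewrite (fPP2 h2) in e9.
have s4 := hsym x y (P *m z).
have s5 := hsym y z (P *m x).
have s6 := hsym z x (P *m y).
have s7 := hsym x (P *m z) y.
have s8 := hsym y (P *m x) z.
have s9 := hsym z (P *m y) x.
lra.
Qed.
End Trilin.

Section ClassL.
Variable R : realFieldType.
Variable n : nat.
Local Notation V := 'cV[R]_(pdim n).
Variables (G P : 'M[R]_(pdim n)) (xi : V) (eta : 'rV[R]_(pdim n)).
Hypothesis hPi : Pi_structure G P xi eta.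
Implicit Types (x y z u v w : V) (a : R).

Lemma LB (f : V -> V -> V -> R) (B : V -> V -> R) :
  (forall x y z, f x y z = B x y * ev eta z + B x z * ev eta y) ->
  forall x y z, Lf P xi eta f x y z = ev eta z * (B (P *m (P *m x)) (P *m y)
     + B (P *m x) (P *m (P *m y)) - B (P *m (P *m y)) (P *m x) - B (P *m y) (P *m (P *m x))).
Proof. move=> hf x y z; rewrite /Lf !hf !(evP hPi) (evxi hPi); ring. Qed.

Lemma Fsym_ev3 (T : tensor3 R n) : Fsym P xi eta T ->
  (forall x y z, ev3 T x y z = ev3 T x z y) /\
  (forall x y z, ev3 T x y z = - ev3 T x (P *m y) (P *m z)
       + ev eta y * ev3 T x xi z + ev eta z * ev3 T x y xi).
Proof. by move=> h; split=> x y z; case: (h x y z). Qed.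

Lemma L_cls1 T : cls1 G P xi eta T -> forall x y z, Lf P xi eta (ev3 T) x y z = 0.
Proof.
rewrite /cls1 /= => -[_ hf]; apply: (LF1 hPi (th := theta G T)) hf.
rewrite /theta; apply: big1 => i _; apply: big1 => j _.
by rewrite (f03 (ev3_trilin T)) mulr0.
Qed.

Lemma L_cls2 T : cls2 G P xi eta T -> forall x y z, Lf P xi eta (ev3 T) x y z = 0.
Proof.
rewrite /cls2 /= => -[/Fsym_ev3 [hs hS] hc] x y z.
have h1 y' z' : ev3 T xi y' z' = 0 by case: (hc x y' z').
have h2 x' z' : ev3 T x' xi z' = 0 by case: (hc x' y z').
have hC x' y' z' : Cyc P (ev3 T) x' y' z' = 0.
  by case: (hc x' y' z') => _ _ _; rewrite /Cyc.
rewrite (L_horiz hPi (ev3_trilin T) hs hS h1 h2) !hC; ring.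
Qed.

Lemma L_cls4 T : cls4 G P xi eta T -> forall x y z, Lf P xi eta (ev3 T) x y z = 0.
Proof.
rewrite /cls4 /= => -[_ hf] x y z.
rewrite (LB (B := fun x y => theta G T xi * (n.*2)%:R^-1 * ip G (P *m x) (P *m y))); last first.
  by move=> ? ? ?; rewrite hf; ring.
rewrite !(ipP hPi) !(PPP hPi) ?(ipsym2 hPi y x) ?(ipsym1 hPi y x); ring.
Qed.

Lemma L_cls5 T : cls5 G P xi eta T -> forall x y z, Lf P xi eta (ev3 T) x y z = 0.
Proof.
rewrite /cls5 /= => -[_ hf] x y z.
rewrite (LB (B := fun x y => theta_s G P T xi * (n.*2)%:R^-1 * ip G x (P *m y))); last first.
  by move=> ? ? ?; rewrite hf; ring.
rewrite !(ipP hPi) !(PPP hPi) ?(ipsym2 hPi y x) ?(ipsym1 hPi y x); ring.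
Qed.

Lemma L_vert T : cls_vert xi eta T -> forall x y z, Lf P xi eta (ev3 T) x y z =
  ev eta z * (ev3 T (P *m (P *m x)) (P *m y) xi
     + ev3 T (P *m x) (P *m (P *m y)) xi - ev3 T (P *m (P *m y)) (P *m x) xi
     - ev3 T (P *m y) (P *m (P *m x)) xi).
Proof. move=> hv x y z; rewrite (LB (f := ev3 T) (B := fun u v => ev3 T u v xi)) // => u v w /=; exact: hv. Qed.

Lemma L_cls6 T : cls6 P xi eta T -> forall x y z, Lf P xi eta (ev3 T) x y z = 0.
Proof.
rewrite /cls6 /= => -[_ [hv hc]] x y z; rewrite (L_vert hv).
have [s1 i1] := hc (P *m (P *m x)) (P *m y).
have [s2 i2] := hc (P *m (P *m y)) (P *m x).
have [s3 _] := hc (P *m x) (P *m (P *m y)).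
rewrite !(PPP hPi) in i1 i2.
rewrite i1 s3 i2; ring.
Qed.

Lemma L_cls8 T : cls8 P xi eta T -> forall x y z, Lf P xi eta (ev3 T) x y z = 0.
Proof.
rewrite /cls8 /= => -[_ [hv hc]] x y z; rewrite (L_vert hv).
have [s1 i1] := hc (P *m (P *m x)) (P *m y).
have [s2 i2] := hc (P *m (P *m y)) (P *m x).
rewrite !(PPP hPi) in i1 i2.
rewrite i1 i2; ring.
Qed.

Lemma L_cls9 T : cls9 P xi eta T -> forall x y z, Lf P xi eta (ev3 T) x y z = 0.
Proof.
rewrite /cls9 /= => -[_ [hv hc]] x y z; rewrite (L_vert hv).
have [s1 i1] := hc (P *m (P *m x)) (P *m y).
have [s2 i2] := hc (P *m (P *m y)) (P *m x).
rewrite !(PPP hPi) in i1 i2.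
rewrite i1 i2; ring.
Qed.

Lemma L_cls10 T : cls10 P xi eta T -> forall x y z, Lf P xi eta (ev3 T) x y z = 0.
Proof.
rewrite /cls10 /= => -[_ hf] x y z.
have hz u v w : ev3 T (P *m u) v w = 0 by rewrite hf (evP hPi) mul0r oppr0.
rewrite /Lf !hz; ring.
Qed.

Lemma L_cls11 T : cls11 P xi eta T -> forall x y z, Lf P xi eta (ev3 T) x y z = 0.
Proof.
rewrite /cls11 /= => -[_ hf] x y z.
have hz u v w : ev3 T (P *m u) v w = 0 by rewrite hf (evP hPi) mul0r.
rewrite /Lf !hz; ring.
Qed.
End ClassL.


Section Mx.
Variable R : realFieldType.
Variable n : nat.
Local Notation V := 'cV[R]_(pdim n).
Variables (G P : 'M[R]_(pdim n)) (xi : V) (eta : 'rV[R]_(pdim n)).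
Hypothesis hPi : Pi_structure G P xi eta.
Implicit Types (x y z u v w : V) (a : R).

Lemma G_unit : G \in unitmx.
Proof.
rewrite -row_free_unit; apply: inj_row_free => v hv.
have h : ip G v^T v^T = 0 by rewrite /ip trmxK hv mul0mx mxE.
apply/eqP; rewrite -(inj_eq (@trmx_inj _ _ _)) trmx0; apply/negPn/negP => /(ip_pos hPi).
by rewrite h ltxx.
Qed.

Lemma Ginv_sym i j : invmx G i j = invmx G j i.
Proof. by have := congr1 (fun A : 'M[R]_(pdim n) => A j i) (trmx_inv G); rewrite mxE (Gsym hPi). Qed.

Lemma ip_ee (M : 'M[R]_(pdim n)) i j : ip G (e R i) (M *m e R j) = (G *m M) i j.
Proof.
rewrite /ip /e trmx_delta !mulmxA -colE -[delta_mx 0 i *m G *m M]mulmxA -rowE.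
by rewrite !mxE.
Qed.

Lemma ip_we w i : ip G w (e R i) = (w^T *m G) 0 i.
Proof. by rewrite /ip /e -colE mxE. Qed.
Lemma ev_e (r : 'rV[R]_(pdim n)) j : ev r (e R j) = r 0 j.
Proof. by rewrite /ev /e -colE mxE. Qed.

Lemma trace_contr (M : 'M[R]_(pdim n)) :
  \sum_i \sum_j invmx G i j * ip G (e R i) (M *m e R j) = \tr M.
Proof.
have -> : \tr M = \tr ((G *m M) *m invmx G).
  by rewrite mxtrace_mulC mulmxA -[invmx G *m G *m M]mulmxA mulmxA (mulVmx G_unit) mul1mx.
rewrite /mxtrace; apply: eq_bigr => i _; rewrite mxE; apply: eq_bigr => j _.
by rewrite ip_ee Ginv_sym mulrC.
Qed.

Lemma contr w (r : 'rV[R]_(pdim n)) :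
  \sum_i \sum_j invmx G i j * ip G w (e R i) * ev r (e R j) = ev r w.
Proof.
rewrite exchange_big /=.
have -> : ev r w = \sum_j r 0 j * (w^T *m G *m invmx G) 0 j.
  rewrite -mulmxA (mulmxV G_unit) mulmx1 /ev mxE; apply: eq_bigr => j _; by rewrite mxE.
apply: eq_bigr => j _; rewrite mxE mulr_sumr; apply: eq_bigr => i _.
by rewrite ip_we ev_e; ring.
Qed.
End Mx.


Section Main.
Variable R : realFieldType.
Variable n : nat.
Local Notation V := 'cV[R]_(pdim n).
Variables (G P : 'M[R]_(pdim n)) (xi : V) (eta : 'rV[R]_(pdim n)).
Variables (Dphi : 'I_(pdim n) -> 'M[R]_(pdim n)) (Dxi : 'M[R]_(pdim n)).
Hypothesis hPi : Pi_structure G P xi eta.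
Hypothesis hLC : LC_jet G P xi eta Dphi Dxi.
Implicit Types (x y z u v w : V) (a : R).
Local Notation F := (Ften G Dphi).

Lemma N_L x y z :
  ip G (Nij G P xi Dphi Dxi (P *m x) (P *m y)) z = Lf P xi eta F x y z.
Proof.
rewrite /Nij !ipDl !ipNl !ipZl !(ipP hPi) (ipxil hPi) !(neta_F hPi hLC).
rewrite /Lf /Ften; ring.
Qed.

Lemma F_trilin : trilin F.
Proof.
split=> [y z a u v|x z a u v|x y a u v] /=; [exact: FL1|exact: FL2|exact: FL3].
Qed.

Lemma dir1 : in_U1 G P xi eta F ->
  forall x y, Nij G P xi Dphi Dxi (P *m x) (P *m y) = 0.
Proof.
move=> [T1 [T2 [T4 [T5 [T6 [T8 [T9 [T10 [T11 [c1 [c2 [c4 [c5 [c6 [c8 [c9 [c10 [c11 hF]]]]]]]]]]]]]]]]]].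
move=> x y; apply: (ip_nondeg hPi) => z; rewrite N_L.
have -> : Lf P xi eta F x y z =
  Lf P xi eta (ev3 T1) x y z + Lf P xi eta (ev3 T2) x y z + Lf P xi eta (ev3 T4) x y z
  + Lf P xi eta (ev3 T5) x y z + Lf P xi eta (ev3 T6) x y z + Lf P xi eta (ev3 T8) x y z
  + Lf P xi eta (ev3 T9) x y z + Lf P xi eta (ev3 T10) x y z + Lf P xi eta (ev3 T11) x y z.
  by rewrite /Lf !hF; ring.
rewrite (L_cls1 hPi c1) (L_cls2 hPi c2) (L_cls4 hPi c4) (L_cls5 hPi c5) (L_cls6 hPi c6).
rewrite (L_cls8 hPi c8) (L_cls9 hPi c9) (L_cls10 hPi c10) (L_cls11 hPi c11).
by rewrite !addr0.
Qed.
End Main.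


Lemma sum4 (R : realFieldType) (I : finType) (a b d f : I -> R) c k1 k2 :
  \sum_i (c * (k1 * a i + b i - k2 * d i - f i)) =
  c * (k1 * \sum_i a i + \sum_i b i - k2 * \sum_i d i - \sum_i f i).
Proof.
rewrite -mulr_sumr; congr (_ * _).
by rewrite !sumrB big_split /= !mulr_sumr.
Qed.

Section Constr.
Variable R : realFieldType.
Variable n : nat.
Local Notation V := 'cV[R]_(pdim n).
Variables (G P : 'M[R]_(pdim n)) (xi : V) (eta : 'rV[R]_(pdim n)).
Variables (Dphi : 'I_(pdim n) -> 'M[R]_(pdim n)) (Dxi : 'M[R]_(pdim n)).
Hypothesis hPi : Pi_structure G P xi eta.
Hypothesis hLC : LC_jet G P xi eta Dphi Dxi.
Hypothesis hn : (0 < n)%N.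
Implicit Types (x y z u v w : V) (a : R).
Local Notation F := (Ften G Dphi).
Local Notation PP u := (P *m (P *m u)).

Definition Th x y z := F (PP x) (PP y) (PP z).
Definition rr : 'rV[R]_(pdim n) := \row_k theta G (tens Th) (e R k).
Definition c2n : R := (n.*2)%:R^-1.
Definition T1f x y z := c2n * (ip G (P *m x) (P *m y) * ev rr (PP z)
  + ip G (P *m x) (P *m z) * ev rr (PP y)
  - ip G x (P *m y) * ev rr (P *m z) - ip G x (P *m z) * ev rr (P *m y)).
Definition T2f x y z := Th x y z - T1f x y z.
Definition Af x y := F (PP x) (PP y) xi.
Definition B6 x y := 4%:R^-1 * (Af x y + Af y x + Af (P *m x) (P *m y) + Af (P *m y) (P *m x)).
Definition B8 x y := 4%:R^-1 * (Af x y + Af y x - Af (P *m x) (P *m y) - Af (P *m y) (P *m x)).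
Definition B9 x y := 4%:R^-1 * (Af x y - Af y x - Af (P *m x) (P *m y) + Af (P *m y) (P *m x)).
Definition vf (B : V -> V -> R) x y z := B x y * ev eta z + B x z * ev eta y.
Definition T10f x y z := ev eta x * F xi (PP y) (PP z).
Definition T11f x y z := ev eta x * (ev eta y * F xi xi (PP z) + ev eta z * F xi xi (PP y)).

Ltac lintac := move=> ? ? ? /=; rewrite ?(PL, FL1, FL2, FL3, evL, ipLl, ipLr); ring.

Lemma Th_tri : trilin Th.
Proof. split=> *; rewrite /Th; lintac. Qed.
Lemma T1f_tri : trilin T1f.
Proof. split=> *; rewrite /T1f; lintac. Qed.
Lemma T2f_tri : trilin T2f.
Proof. split=> *; rewrite /T2f /T1f /Th; lintac. Qed.
Lemma AfL1 a u v y : Af (a *: u + v) y = a * Af u y + Af v y.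
Proof. by rewrite /Af !PL FL1. Qed.
Lemma AfL2 a u v y : Af y (a *: u + v) = a * Af y u + Af y v.
Proof. by rewrite /Af !PL FL2. Qed.
Definition bilin (B : V -> V -> R) : Prop :=
  and (forall (a : R) (u v y : V), B (a *: u + v) y = a * B u y + B v y)
  (forall (a : R) (u v y : V), B y (a *: u + v) = a * B y u + B y v).
Lemma vf_tri B : bilin B -> trilin (vf B).
Proof.
case=> h1 h2; split=> *; move=> ? ? ? /=; rewrite /vf ?h1 ?h2 ?evL; ring.
Qed.
Lemma B6_bil : bilin B6.
Proof. split=> *; rewrite /B6 ?PL ?AfL1 ?AfL2; ring. Qed.
Lemma B8_bil : bilin B8.
Proof. split=> *; rewrite /B8 ?PL ?AfL1 ?AfL2; ring. Qed.
Lemma B9_bil : bilin B9.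
Proof. split=> *; rewrite /B9 ?PL ?AfL1 ?AfL2; ring. Qed.
Lemma vf6_tri : trilin (vf B6). Proof. exact: vf_tri B6_bil. Qed.
Lemma vf8_tri : trilin (vf B8). Proof. exact: vf_tri B8_bil. Qed.
Lemma vf9_tri : trilin (vf B9). Proof. exact: vf_tri B9_bil. Qed.
Lemma T10f_tri : trilin T10f.
Proof. split=> *; rewrite /T10f; lintac. Qed.
Lemma T11f_tri : trilin T11f.
Proof. split=> *; rewrite /T11f; lintac. Qed.
Lemma Z_tri : trilin (fun _ _ _ : V => (0 : R)).
Proof. split=> *; move=> ? ? ? /=; ring. Qed.

Lemma trPP : \tr (P *m P) = (n.*2)%:R.
Proof.
case: hPi => _ [_ [_ [h _]]]; rewrite h mxtraceD mxtrace1 raddfN /= mxtrace_mulC.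
rewrite /mxtrace big_ord1 -[(eta *m xi) ord0 ord0]/(ev eta xi) (evxi hPi) /pdim -natr1; ring.
Qed.
Lemma trP : \tr P = 0.
Proof. by case: hPi => _ [_ [_ [_ [_ [_ [h _]]]]]]. Qed.
Lemma c2nK : c2n * (n.*2)%:R = 1.
Proof. rewrite /c2n mulVf // pnatr_eq0 double_eq0; by case: n hn. Qed.

Lemma evPm (r : 'rV[R]_(pdim n)) u : ev (r *m P) u = ev r (P *m u).
Proof. by rewrite /ev mulmxA. Qed.

Lemma thetaT1 w : theta G (tens T1f) w = ev rr (PP w).
Proof.
rewrite (theta_tens G T1f_tri).
have E i j : invmx G i j * T1f (e R i) (e R j) w = c2n * (
   ev rr (PP w) * (invmx G i j * ip G (e R i) ((P *m P) *m e R j))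
 + invmx G i j * ip G (PP w) (e R i) * ev (rr *m P *m P) (e R j)
 - ev rr (P *m w) * (invmx G i j * ip G (e R i) (P *m e R j))
 - invmx G i j * ip G (P *m w) (e R i) * ev (rr *m P) (e R j)).
  rewrite /T1f [in LHS](ipP hPi) [in LHS](ipP hPi) -mulmxA !evPm (ipC hPi (e R i) (PP w)) (ipC hPi (e R i) (P *m w)).
  ring.
under eq_bigr => i _ do under eq_bigr => j _ do rewrite E.
under eq_bigr => i _ do rewrite sum4.
rewrite sum4 (trace_contr hPi) (trace_contr hPi) !(contr hPi) trPP trP !evPm !(PPP hPi).
have h2 := c2nK. rewrite mulr0 subr0 addrK mulrCA h2 mulr1 //.
Qed.

Lemma F01 u v : F 0 u v = 0.
Proof. by have := FL1 G Dphi 1 0 0 u v; rewrite scale1r addr0 mul1r => h; lra. Qed.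
Lemma F03 u v : F u v 0 = 0.
Proof. by rewrite /Ften ip0r. Qed.
Lemma FB1 a x w u v : F (x - a *: w) u v = F x u v - a * F w u v.
Proof. rewrite -scaleNr addrC FL1; ring. Qed.
Lemma FB2 a x w u v : F u (x - a *: w) v = F u x v - a * F u w v.
Proof. rewrite -scaleNr addrC FL2; ring. Qed.
Lemma FB3 a x w u v : F u v (x - a *: w) = F u v x - a * F u v w.
Proof. rewrite -scaleNr addrC FL3; ring. Qed.

Hypothesis hL : forall x y z, Lf P xi eta F x y z = 0.

Lemma B7zero x y : Af x y - Af y x + Af (P *m x) (P *m y) - Af (P *m y) (P *m x) = 0.
Proof.
have := hL x (P *m y) xi.
rewrite /Lf /Af !(PPP hPi) (Pxi hPi) ?mulmx0 ?F03 (evxi hPi) => h; lra.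
Qed.

Lemma decomp_main x y z :
  F x y z = Th x y z + vf Af x y z + T10f x y z + T11f x y z.
Proof.
rewrite /Th /Af /vf /T10f /T11f !(PPe hPi) !FB1 !FB2 !FB3 !(Fxixi hPi hLC).
rewrite !(Fsym23 hPi hLC _ xi) ?(Fxixi hPi hLC). ring.
Qed.

Lemma decomp_all x y z :
  F x y z = T1f x y z + T2f x y z + 0 + 0 + vf B6 x y z + vf B8 x y z + vf B9 x y z
     + T10f x y z + T11f x y z.
Proof.
rewrite decomp_main /T2f /vf /B6 /B8 /B9.
have h1 := B7zero x y. have h2 := B7zero x z.
have e1 : Af x y = Af y x - Af (P *m x) (P *m y) + Af (P *m y) (P *m x) by lra.
have e2 : Af x z = Af z x - Af (P *m x) (P *m z) + Af (P *m z) (P *m x) by lra.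
by rewrite e1 e2; field.

Qed.

Lemma Fsym_of f : trilin f -> (forall x y z, f x y z = f x z y) ->
  (forall x y z, f x y z = - f x (P *m y) (P *m z) + ev eta y * f x xi z + ev eta z * f x y xi) ->
  Fsym P xi eta (tens f).
Proof. by move=> hf hs hS x y z; rewrite !(ev3_tens hf); split; [apply: hs|apply: hS]. Qed.

Lemma T1f_sym x y z : T1f x y z = T1f x z y.
Proof. rewrite /T1f; ring. Qed.
Lemma T1f_xi2 x z : T1f x xi z = 0.
Proof. rewrite /T1f (Pxi hPi) ?mulmx0 ?ev0 ?ip0r; ring. Qed.
Lemma T1f_xi3 x y : T1f x y xi = 0.
Proof. by rewrite T1f_sym T1f_xi2. Qed.
Lemma T1f_xi1 y z : T1f xi y z = 0.
Proof. rewrite /T1f (Pxi hPi) ?ip0l !(ipxil hPi) !(evP hPi); ring. Qed.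
Lemma T1f_anti x y z : T1f x y z = - T1f x (P *m y) (P *m z).
Proof. rewrite /T1f !(ipP hPi) !(PPP hPi); ring. Qed.
Lemma T1f_S2 x y z :
  T1f x y z = - T1f x (P *m y) (P *m z) + ev eta y * T1f x xi z + ev eta z * T1f x y xi.
Proof. by rewrite T1f_xi2 T1f_xi3 !mulr0 !addr0 -T1f_anti. Qed.
Lemma T1f_cyc x y z : T1f x y (P *m z) + T1f y z (P *m x) + T1f z x (P *m y) = 0.
Proof.
rewrite /T1f !(ipP hPi) !(PPP hPi).
rewrite ?(ipsym1 hPi x y) ?(ipsym1 hPi y z) ?(ipsym1 hPi z x).
rewrite ?(ipsym2 hPi x y) ?(ipsym2 hPi y z) ?(ipsym2 hPi z x).
ring.
Qed.

Lemma cls1_T1 : cls1 G P xi eta (tens T1f).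
Proof.
split; first exact: (Fsym_of T1f_tri T1f_sym T1f_S2).
move=> x y z /=; rewrite !thetaT1 !(PPP hPi) (ev3_tens T1f_tri) //.
Qed.

Lemma Th_sym x y z : Th x y z = Th x z y.
Proof. by rewrite /Th (Fsym23 hPi hLC). Qed.
Lemma Th_xi1 y z : Th xi y z = 0.
Proof. by rewrite /Th (Pxi hPi) mulmx0 F01. Qed.
Lemma Th_xi2 x z : Th x xi z = 0.
Proof. by rewrite /Th (Pxi hPi) mulmx0 F0_2. Qed.
Lemma Th_xi3 x y : Th x y xi = 0.
Proof. by rewrite Th_sym Th_xi2. Qed.
Lemma Th_S2 x y z :
  Th x y z = - Th x (P *m y) (P *m z) + ev eta y * Th x xi z + ev eta z * Th x y xi.
Proof.
rewrite Th_xi2 Th_xi3 !mulr0 !addr0 /Th (FS2 hPi hLC (PP x) (PP y)) !(PPP hPi) !(evP hPi).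
ring.
Qed.

Lemma Th_L x y z : Lf P xi eta Th x y z = 0.
Proof.
have := hL x y (P *m (P *m z)).
rewrite /Lf /Th !(PPP hPi) ?(Pxi hPi) ?mulmx0 ?F03 !(evP hPi) => h; lra.
Qed.

Lemma Th_cyc x y z : Cyc P Th x y z = 0.
Proof.
have := cyc_L hPi Th_tri Th_sym Th_S2 Th_xi1 Th_xi2 x y z.
rewrite !Th_L => h; lra.
Qed.

Lemma theta_Th_lin : lin (theta G (tens Th)).
Proof.
move=> a u v; rewrite !(theta_tens G Th_tri) mulr_sumr -big_split; apply: eq_bigr => i _.
rewrite mulr_sumr -big_split; apply: eq_bigr => j _ /=.
rewrite /Th PL PL FL3; ring.
Qed.
Lemma theta_Th_ev w : theta G (tens Th) w = ev rr w.
Proof.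
rewrite (lin_sum theta_Th_lin w) /ev mxE; apply: eq_bigr => k _.
by rewrite /rr mxE mulrC.
Qed.
Lemma theta_Th_PP w : theta G (tens Th) (PP w) = theta G (tens Th) w.
Proof.
rewrite !(theta_tens G Th_tri); apply: eq_bigr => i _; apply: eq_bigr => j _.
by rewrite /Th !(PPP hPi).
Qed.

Lemma cls2_T2 : cls2 G P xi eta (tens T2f).
Proof.
split.
  apply: (Fsym_of T2f_tri).
    by move=> x y z; rewrite /T2f Th_sym T1f_sym.
  move=> x y z; rewrite /T2f {1}Th_S2 {1}T1f_S2; ring.
move=> x y z; rewrite !(ev3_tens T2f_tri); split.
- by rewrite /T2f Th_xi1 T1f_xi1 subr0.
- by rewrite /T2f Th_xi2 T1f_xi2 subr0.
- rewrite (theta_tens G T2f_tri).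
  have -> : \sum_i \sum_j invmx G i j * T2f (e R i) (e R j) z =
     theta G (tens Th) z - theta G (tens T1f) z.
    rewrite !(theta_tens G Th_tri) !(theta_tens G T1f_tri) -sumrB; apply: eq_bigr => i _.
    rewrite -sumrB; apply: eq_bigr => j _; rewrite /T2f; ring.
  by rewrite thetaT1 -theta_Th_ev theta_Th_PP subrr.
- have h1 := Th_cyc x y z. have h2 := T1f_cyc x y z.
  move: h1 h2; rewrite /Cyc /T2f => h1 h2; lra.
Qed.

Lemma vf_Fsym B : bilin B -> (forall x, B x xi = 0) -> Fsym P xi eta (tens (vf B)).
Proof.
move=> hB h0; apply: (Fsym_of (vf_tri hB)).
  by move=> x y z; rewrite /vf addrC.
move=> x y z; rewrite /vf !(evP hPi) (evxi hPi) !h0; ring.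
Qed.
Lemma vf_vert B : bilin B -> (forall x, B x xi = 0) -> cls_vert xi eta (tens (vf B)).
Proof.
move=> hB h0 x y z /=; rewrite !(ev3_tens (vf_tri hB)) /vf !h0 (evxi hPi); ring.
Qed.
Lemma vf_xi B : bilin B -> (forall x, B x xi = 0) -> forall x y,
  ev3 (tens (vf B)) x y xi = B x y.
Proof. by move=> hB h0 x y; rewrite (ev3_tens (vf_tri hB)) /vf h0 (evxi hPi); ring. Qed.

Lemma Af_xi1 x : Af xi x = 0.
Proof. by rewrite /Af (Pxi hPi) mulmx0 F01. Qed.
Lemma Af_xi2 x : Af x xi = 0.
Proof. by rewrite /Af (Pxi hPi) mulmx0 F0_2. Qed.
Lemma AfP x y : Af (P *m (P *m x)) (P *m (P *m y)) = Af x y.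
Proof. by rewrite /Af !(PPP hPi). Qed.

Lemma B6_xi x : B6 x xi = 0.
Proof. rewrite /B6 /Af (Pxi hPi) !mulmx0 !F01 !F0_2; ring. Qed.
Lemma B8_xi x : B8 x xi = 0.
Proof. rewrite /B8 /Af (Pxi hPi) !mulmx0 !F01 !F0_2; ring. Qed.
Lemma B9_xi x : B9 x xi = 0.
Proof. rewrite /B9 /Af (Pxi hPi) !mulmx0 !F01 !F0_2; ring. Qed.

Lemma cls6_T6 : cls6 P xi eta (tens (vf B6)).
Proof.
split; first exact: (vf_Fsym B6_bil B6_xi).
split; first exact: (vf_vert B6_bil B6_xi).
move=> x y; rewrite !(vf_xi B6_bil B6_xi) /B6 !AfP; split; ring.
Qed.
Lemma cls8_T8 : cls8 P xi eta (tens (vf B8)).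
Proof.
split; first exact: (vf_Fsym B8_bil B8_xi).
split; first exact: (vf_vert B8_bil B8_xi).
move=> x y; rewrite !(vf_xi B8_bil B8_xi) /B8 !AfP; split; ring.
Qed.
Lemma cls9_T9 : cls9 P xi eta (tens (vf B9)).
Proof.
split; first exact: (vf_Fsym B9_bil B9_xi).
split; first exact: (vf_vert B9_bil B9_xi).
move=> x y; rewrite !(vf_xi B9_bil B9_xi) /B9 !AfP; split; ring.
Qed.

Lemma FxiPP y z : F xi (PP y) (PP z) = - F xi (P *m y) (P *m z).
Proof. by rewrite (FS2 hPi hLC xi (PP y)) !(PPP hPi) !(evP hPi) !mul0r !addr0. Qed.

Lemma cls10_T10 : cls10 P xi eta (tens T10f).
Proof.
split.
  apply: (Fsym_of T10f_tri).
    by move=> x y z; rewrite /T10f (Fsym23 hPi hLC).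
  move=> x y z; rewrite /T10f (Pxi hPi) !mulmx0 F0_2 F03 !(PPP hPi) FxiPP; ring.
move=> x y z /=; rewrite !(ev3_tens T10f_tri) /T10f (evxi hPi) !(PPP hPi) FxiPP; ring.
Qed.

Lemma cls11_T11 : cls11 P xi eta (tens T11f).
Proof.
split.
  apply: (Fsym_of T11f_tri).
    by move=> x y z; rewrite /T11f; ring.
  move=> x y z; rewrite /T11f (Pxi hPi) !mulmx0 !F03 !(evP hPi) (evxi hPi); ring.
move=> x y z /=; rewrite (omega_tens xi T11f_tri) (omega_tens xi T11f_tri).
rewrite !(ev3_tens T11f_tri) /T11f (evxi hPi) (Pxi hPi) !mulmx0 !F03; ring.
Qed.

Definition Z : tensor3 R n := tens (fun _ _ _ => 0).
Lemma ev3Z x y z : ev3 Z x y z = 0.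
Proof. by rewrite /Z (ev3_tens Z_tri). Qed.
Lemma FsymZ : Fsym P xi eta Z.
Proof. move=> x y z; rewrite !ev3Z; split=> //; ring. Qed.
Lemma cls4_Z : cls4 G P xi eta Z.
Proof.
split; first exact: FsymZ. move=> x y z /=; rewrite !ev3Z.
have -> : theta G Z xi = 0.
  by rewrite /theta; apply: big1 => i _; apply: big1 => j _; rewrite ev3Z mulr0.
ring.
Qed.
Lemma cls5_Z : cls5 G P xi eta Z.
Proof.
split; first exact: FsymZ. move=> x y z /=; rewrite !ev3Z.
have -> : theta_s G P Z xi = 0.
  by rewrite /theta_s; apply: big1 => i _; apply: big1 => j _; rewrite ev3Z mulr0.
ring.
Qed.

Lemma dir2 : in_U1 G P xi eta F.
Proof.
exists (tens T1f), (tens T2f), Z, Z, (tens (vf B6)), (tens (vf B8)), (tens (vf B9)),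
  (tens T10f), (tens T11f).
do 9 (split; first by [exact: cls1_T1|exact: cls2_T2|exact: cls4_Z|exact: cls5_Z
   |exact: cls6_T6|exact: cls8_T8|exact: cls9_T9|exact: cls10_T10|exact: cls11_T11]).
move=> x y z; rewrite (ev3_tens T1f_tri) (ev3_tens T2f_tri) !ev3Z (ev3_tens vf6_tri).
rewrite (ev3_tens vf8_tri) (ev3_tens vf9_tri) (ev3_tens T10f_tri) (ev3_tens T11f_tri).
exact: decomp_all.
Qed.
End Constr.

Unset Implicit Arguments.
Set Strict Implicit.

Theorem lemma2p2 (R : realFieldType) (n : nat)
    (G P : 'M[R]_(pdim n)) (xi : 'cV[R]_(pdim n)) (eta : 'rV[R]_(pdim n))
    (Dphi : 'I_(pdim n) -> 'M[R]_(pdim n)) (Dxi : 'M[R]_(pdim n)) :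
  (0 < n)%N ->
  Pi_structure G P xi eta ->
  LC_jet G P xi eta Dphi Dxi ->
  (in_U1 G P xi eta (Ften G Dphi) <->
   forall x y : 'cV[R]_(pdim n), Nij G P xi Dphi Dxi (P *m x) (P *m y) = 0).
Proof.
move=> hn hPi hLC; split; first exact: (dir1 hPi hLC).
move=> hN; apply: (dir2 hPi hLC hn) => x y z.
by rewrite -(N_L hPi hLC) hN ip0l.
Qed.
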